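(* Let $\Phi:I\to O$ be a quantum channel and let $(\mathcal{E},W)$ and $(\mathcal{E}',W')$ be two Stinespring modules related to $\Phi$. Then $$W^*\mathcal{L}(\mathcal{E})W=W'^*\mathcal{L}(\mathcal{E}')W'\subseteq\mathcal{L}(\mathcal{M}_\Phi).$$
   Context: All Hilbert spaces are finite dimensional; inner products are linear in the second variable. $H_{in}=\bigoplus_a H^a_{in}$, $H_{out}=\bigoplus_b H^b_{out}$, $I=\bigoplus_a B(H^a_{in})\subseteq B(H_{in})$, $O=\bigoplus_b B(H^b_{out})\subseteq B(H_{out})$. A quantum channel is a trace-preserving completely positive map $\Phi:I\to O$. $e^a_i$ is an orthonormal basis of $H^a_{in}$, $e^a_{ij}$ the matrix units. $O^{op}$ is the opposite algebra of $O$ (product $a*b=ba$). Hilbert $O^{op}$-modules are right modules with $O^{op}$-valued inner products; $\mathcal{L}(\mathcal{M},\mathcal{N})$ denotes adjointable module maps and $\mathcal{L}(\mathcal{M})=\mathcal{L}(\mathcal{M},\mathcal{M})$. $\mathcal{M}_\Phi=H_{in}\otimes O^{op}$ with $(\xi\otimes a)*x=\xi\otimes(a*x)$ and $\langle\xi\otimes a,\eta\otimes b\rangle_{O^{op}}=\langle\xi,\eta\rangle a^**b$. $C_\Phi\in\mathcal{L}(\mathcal{M}_\Phi)$ is the $O^{op}$-linear map with $C_\Phi(e^a_j\otimes1)=\sum_i e^a_i\otimes\Phi(e^a_{ji})$ (with $\Phi(e^a_{ji})$ viewed in $O^{op}$). A Stinespring module related to $\Phi$ is a pair $(\mathcal{E},W)$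 with $\mathcal{E}$ a Hilbert $O^{op}$-module and $W\in\mathcal{L}(\mathcal{M}_\Phi,\mathcal{E})$ with $W^*W=C_\Phi$. *)

(* Defs.v *)
From HB Require Import structures.
From mathcomp Require Import all_boot all_algebra.
From mathcomp Require Import reals complex.

Set Implicit Arguments.
Unset Strict Implicit.
Unset Printing Implicit Defensive.

Import GRing.Theory Num.Theory.
Local Open Scope ring_scope.

Section QuantumDefs.

Variable R : realType.
Local Notation C := R[i].

Definition mxadj p q (A : 'M[C]_(p, q)) : 'M[C]_(q, p) :=
  (map_mx (@Num.conj C) A)^T.

(** A direct sum of full matrix algebras  \bigoplus_a B(H^a) \subseteq B(C^p):
    the block structure is given by a labelling  l : 'I_p -> nat  of the
    standard basis vectors (H^a = span {e_i | l i = a}); the algebra is the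
    set of matrices whose (i,j) entry vanishes when  l i <> l j. *)
Definition blk p (l : 'I_p -> nat) (A : 'M[C]_p) : bool :=
  [forall i, forall j, (l i != l j) ==> (A i j == 0)].

(** positivity in M_k(A) for the C*-algebra A = blk l  (X = Y^* Y, Y in M_k(A));
    an element of M_k(A) is given blockwise as  X : 'I_k -> 'I_k -> 'M_p. *)
Definition posMk p (l : 'I_p -> nat) k (X : 'I_k -> 'I_k -> 'M[C]_p) : Prop :=
  exists Y : 'I_k -> 'I_k -> 'M[C]_p,
    (forall r s, blk l (Y r s)) /\
    (forall s t, X s t = \sum_(r < k) mxadj (Y r s) *m Y r t).

(** quantum channel  Phi : I -> O  (trace preserving, completely positive).
    Phi is given as a map on all of B(H_in); only its restriction to I matters. *)
Record channel n m (lI : 'I_n -> nat) (lO : 'I_m -> nat)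
    (Phi : 'M[C]_n -> 'M[C]_m) : Prop := {
  ch_range : forall A, blk lI A -> blk lO (Phi A);
  ch_linear : forall (c : C) A B, blk lI A -> blk lI B ->
      Phi (c *: A + B) = c *: Phi A + Phi B;
  ch_cp : forall k (X : 'I_k -> 'I_k -> 'M[C]_n),
      (forall s t, blk lI (X s t)) -> posMk lI X ->
      posMk lO (fun s t => Phi (X s t));
  ch_tp : forall A, blk lI A -> \tr (Phi A) = \tr A
}.

Section HilbertModules.
Variables (m : nat) (lO : 'I_m -> nat).

(** Hilbert O^op-module structure on a complex vector space E:
    right action  act x a = x * a  (a in O, product of O^op: a * b = b a),
    O^op-valued inner product  ip x y = <x, y>  (linear in the second variable). *)
Record HilbMod (E : lmodType C) (act : E -> 'M[C]_m -> E)
    (ip : E -> E -> 'M[C]_m) : Prop := {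
  hm_act_assoc : forall x a b, blk lO a -> blk lO b ->
      act x (b *m a) = act (act x a) b;               (* x*(a*b) = (x*a)*b *)
  hm_act1 : forall x, act x 1%:M = x;
  hm_actDl : forall x y a, blk lO a -> act (x + y) a = act x a + act y a;
  hm_actDr : forall x a b, blk lO a -> blk lO b ->
      act x (a + b) = act x a + act x b;
  hm_actZl : forall (c : C) x a, blk lO a -> act (c *: x) a = c *: act x a;
  hm_actZr : forall (c : C) x a, blk lO a -> act x (c *: a) = c *: act x a;
  hm_ip_range : forall x y, blk lO (ip x y);
  hm_ip_lin : forall (c : C) x y z, ip x (c *: y + z) = c *: ip x y + ip x z;
  hm_ip_act : forall x y a, blk lO a -> ip x (act y a) = a *m ip x y;
                                                      (* <x,y*a> = <x,y>*a *)
  hm_ip_adj : forall x y, ip y x = mxadj (ip x y);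
  hm_ip_pos : forall x, exists2 b, blk lO b & ip x x = b *m mxadj b;
                                                      (* <x,x> = b^* * b in O^op *)
  hm_ip_def : forall x, ip x x = 0 -> x = 0;
  hm_complete : forall u : nat -> E,
      (forall eps : R, 0 < eps -> exists N, forall p q, (N <= p)%N -> (N <= q)%N ->
          `| \tr (ip (u p - u q) (u p - u q)) | < (eps%:C)%C) ->
      exists x, forall eps : R, 0 < eps -> exists N, forall p, (N <= p)%N ->
          `| \tr (ip (u p - x) (u p - x)) | < (eps%:C)%C
}.

Definition Lmap (E F : lmodType C) (actE : E -> 'M[C]_m -> E)
    (ipE : E -> E -> 'M[C]_m) (actF : F -> 'M[C]_m -> F)
    (ipF : F -> F -> 'M[C]_m) (T : E -> F) : Prop :=
  [/\ forall (c : C) x y, T (c *: x + y) = c *: T x + T y,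
      forall x a, blk lO a -> T (actE x a) = actF (T x) a
    & exists Ta : F -> E, forall x y, ipF (T x) y = ipE x (Ta y)].

Definition is_adjoint (E F : lmodType C) (ipE : E -> E -> 'M[C]_m)
    (ipF : F -> F -> 'M[C]_m) (T : E -> F) (Ta : F -> E) : Prop :=
  forall x y, ipF (T x) y = ipE x (Ta y).

End HilbertModules.

(** The module  M_Phi = H_in (x) O^op,  H_in = C^n, realised as the n-tuples
    (x_i)_i of elements of O, via  xi (x) a  |->  (xi_i a)_i. *)
Section MPhi.
Variables (n m : nat) (lO : 'I_m -> nat).

Definition Mpred : {pred {ffun 'I_n -> 'M[C]_m}} :=
  fun x => [forall i, blk lO (x i)].

Fact Mpred_submod : subsemimod_closed Mpred.
Proof.
split; [split|].
- apply/forallP => i; apply/forallP => j; apply/forallP => k.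
  by apply/implyP => _; rewrite ffunE mxE.
- move=> x y /forallP Hx /forallP Hy; apply/forallP => i.
  apply/forallP => j; apply/forallP => k; apply/implyP => hjk.
  move: (Hx i) (Hy i) => /forallP /(_ j) /forallP /(_ k) /implyP /(_ hjk) /eqP h1.
  move=> /forallP /(_ j) /forallP /(_ k) /implyP /(_ hjk) /eqP h2.
  by rewrite ffunE mxE h1 h2 addr0.
- move=> c x /forallP Hx; apply/forallP => i.
  apply/forallP => j; apply/forallP => k; apply/implyP => hjk.
  move: (Hx i) => /forallP /(_ j) /forallP /(_ k) /implyP /(_ hjk) /eqP h1.
  by rewrite ffunE mxE h1 mulr0.
Qed.

HB.instance Definition _ :=
  GRing.isSubmodClosed.Build C {ffun 'I_n -> 'M[C]_m} Mpred Mpred_submod.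

Record Mphi := MPhi { mval :> {ffun 'I_n -> 'M[C]_m}; mvalP : mval \in Mpred }.
HB.instance Definition _ := [isSub for mval].
HB.instance Definition _ := [Choice of Mphi by <:].
HB.instance Definition _ := [SubChoice_isSubLmodule of Mphi by <:].

(** right O^op-action:  (xi (x) a) * c = xi (x) (c a) *)
Definition actM (x : Mphi) (c : 'M[C]_m) : Mphi :=
  insubd x [ffun i => c *m x i].

(** <xi (x) a, eta (x) b> = <xi, eta> a^* * b = <xi,eta> b a^*  (product of O) *)
Definition ipM (x y : Mphi) : 'M[C]_m := \sum_(i < n) y i *m mxadj (x i).

(** C_Phi : the O^op-linear map with
    C_Phi (e_j (x) 1) = \sum_{i in the block of j} e_i (x) Phi (e_{ji}) *)
Definition Cphi (lI : 'I_n -> nat) (Phi : 'M[C]_n -> 'M[C]_m) (x : Mphi) : Mphi :=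
  insubd 0 [ffun i => \sum_(j < n | lI j == lI i) x j *m Phi (delta_mx j i)].

End MPhi.

Definition Stinespring n m (lI : 'I_n -> nat) (lO : 'I_m -> nat)
    (Phi : 'M[C]_n -> 'M[C]_m) (E : lmodType C) (actE : E -> 'M[C]_m -> E)
    (ipE : E -> E -> 'M[C]_m) (W : Mphi n lO -> E) (Wa : E -> Mphi n lO) : Prop :=
  [/\ HilbMod lO actE ipE,
      Lmap lO (@actM n m lO) (@ipM n m lO) actE ipE W,
      is_adjoint (@ipM n m lO) ipE W Wa
    & forall x, Wa (W x) = Cphi lI Phi x].

Definition compress n m (lO : 'I_m -> nat) (E : lmodType C)
    (actE : E -> 'M[C]_m -> E) (ipE : E -> E -> 'M[C]_m)
    (W : Mphi n lO -> E) (Wa : E -> Mphi n lO) (X : Mphi n lO -> Mphi n lO) : Prop :=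
  exists T : E -> E, Lmap lO actE ipE actE ipE T /\ X = Wa \o T \o W.

End QuantumDefs.

(* Main.v *)
Require Import Defs.
From HB Require Import structures.
From mathcomp Require Import all_boot all_algebra.
From mathcomp Require Import reals complex.
From Stdlib Require Import FunctionalExtensionality.
Set Implicit Arguments. Unset Strict Implicit. Unset Printing Implicit Defensive.
Import GRing.Theory Num.Theory.
Local Open Scope ring_scope.

Section Gen.
Variable R : realType.
Local Notation C := R[i].

Lemma mxadjD p q (A B : 'M[C]_(p, q)) : mxadj (A + B) = mxadj A + mxadj B.
Proof. by apply/matrixP => i j; rewrite !mxE rmorphD. Qed.
Lemma mxadjZ p q (c : C) (A : 'M[C]_(p, q)) : mxadj (c *: A) = c^* *: mxadj A.
Proof. by apply/matrixP => i j; rewrite !mxE rmorphM. Qed.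
Lemma mxadjM p q r (A : 'M[C]_(p, q)) (B : 'M[C]_(q, r)) :
  mxadj (A *m B) = mxadj B *m mxadj A.
Proof. by rewrite /mxadj map_mxM trmx_mul. Qed.
Lemma mxadjK p q (A : 'M[C]_(p, q)) : mxadj (mxadj A) = A.
Proof. by apply/matrixP => i j; rewrite !mxE conjCK. Qed.
Lemma mxadj0 p q : mxadj (0 : 'M[C]_(p, q)) = 0.
Proof. by apply/matrixP => i j; rewrite !mxE rmorph0. Qed.
Lemma mxadj_sum p q N (F : 'I_N -> 'M[C]_(p, q)) :
  mxadj (\sum_(k < N) F k) = \sum_(k < N) mxadj (F k).
Proof.
elim: N F => [|N IH] F; first by rewrite !big_ord0 mxadj0.
by rewrite !big_ord_recr /= mxadjD IH.
Qed.

Variables (m : nat) (lO : 'I_m -> nat).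

Lemma blkP (A : 'M[C]_m) : blk lO A <-> forall i j, lO i != lO j -> A i j = 0.
Proof.
split.
- by move=> /forallP H i j hij; move: (H i) => /forallP /(_ j) /implyP /(_ hij) /eqP.
- move=> H; apply/forallP => i; apply/forallP => j; apply/implyP => hij.
  by rewrite H.
Qed.

Lemma blkM (A B : 'M[C]_m) : blk lO A -> blk lO B -> blk lO (A *m B).
Proof.
move=> /blkP hA /blkP hB; apply/blkP => i j hij; rewrite mxE.
apply: big1 => k _.
case: (eqVneq (lO i) (lO k)) => hik.
- by rewrite hB ?mulr0 // -hik.
- by rewrite hA ?mul0r.
Qed.


Definition lin (V U : lmodType C) (f : V -> U) :=
  forall (c : C) x y, f (c *: x + y) = c *: f x + f y.

Section LinF.
Variables (V U : lmodType C) (f : V -> U) (hf : lin f).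
Lemma lin0 : f 0 = 0.
Proof. have h := hf 1 0 0; rewrite !scale1r addr0 in h. by apply: (addrI (f 0)); rewrite addr0 -h. Qed.
Lemma linD x y : f (x + y) = f x + f y.
Proof. by move: (hf 1 x y); rewrite !scale1r. Qed.
Lemma linZ c x : f (c *: x) = c *: f x.
Proof. by move: (hf c x 0); rewrite !addr0 lin0 addr0. Qed.
Lemma linN x : f (- x) = - f x.
Proof. by rewrite -scaleN1r linZ scaleN1r. Qed.
Lemma linB x y : f (x - y) = f x - f y.
Proof. by rewrite linD linN. Qed.
Lemma lin_sum N (F : 'I_N -> V) : f (\sum_(k < N) F k) = \sum_(k < N) f (F k).
Proof.
elim: N F => [|N IH] F; first by rewrite !big_ord0 lin0.
by rewrite !big_ord_recr /= linD IH.
Qed.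
End LinF.

Lemma lin_comp (V U Z : lmodType C) (f : U -> Z) (g : V -> U) :
  lin f -> lin g -> lin (f \o g).
Proof. by move=> hf hg c x y /=; rewrite hg hf. Qed.

Record PH (V : lmodType C) (act : V -> 'M[C]_m -> V) (ip : V -> V -> 'M[C]_m)
  : Prop := {
  ph_lin : forall (c : C) x y z, ip x (c *: y + z) = c *: ip x y + ip x z;
  ph_adj : forall x y, ip y x = mxadj (ip x y);
  ph_def : forall x, ip x x = 0 -> x = 0;
  ph_act : forall x y a, blk lO a -> ip x (act y a) = a *m ip x y }.

Lemma HilbMod_PH (V : lmodType C) act ip : HilbMod lO act ip -> @PH V act ip.
Proof. by case=> *; split. Qed.

Section PHth.
Variables (V : lmodType C) (act : V -> 'M[C]_m -> V) (ip : V -> V -> 'M[C]_m).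
Hypothesis hV : PH act ip.

Lemma ip_linr x : lin (ip x).
Proof. by move=> c y z; rewrite (ph_lin hV). Qed.
Lemma ipr0 x : ip x 0 = 0. Proof. exact: lin0 (ip_linr x). Qed.
Lemma ipl_lin (c : C) x y z : ip (c *: x + y) z = c^* *: ip x z + ip y z.
Proof. by rewrite (ph_adj hV) (ph_lin hV) mxadjD mxadjZ -!(ph_adj hV). Qed.
Lemma iplD x y z : ip (x + y) z = ip x z + ip y z.
Proof. by have := ipl_lin 1 x y z; rewrite scale1r rmorph1 scale1r. Qed.
Lemma ipl0 x : ip 0 x = 0. Proof. by rewrite (ph_adj hV) ipr0 mxadj0. Qed.
Lemma ipl_sum N (F : 'I_N -> V) y : ip (\sum_(k < N) F k) y = \sum_(k < N) ip (F k) y.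
Proof.
elim: N F => [|N IH] F; first by rewrite !big_ord0 ipl0.
by rewrite !big_ord_recr /= iplD IH.
Qed.
Lemma ip_nondeg a b : (forall y, ip y a = ip y b) -> a = b.
Proof.
move=> H; apply/eqP; rewrite -subr_eq0; apply/eqP; apply: (ph_def hV).
by rewrite (linB (ip_linr _)) H subrr.
Qed.
End PHth.

Section Adj.
Variables (V U : lmodType C) (actV : V -> 'M[C]_m -> V) (ipV : V -> V -> 'M[C]_m)
  (actU : U -> 'M[C]_m -> U) (ipU : U -> U -> 'M[C]_m).
Hypotheses (hV : PH actV ipV) (hU : PH actU ipU).
Variables (T : V -> U) (Ta : U -> V).
Hypothesis hT : is_adjoint ipV ipU T Ta.

Lemma adj_lin : lin Ta.
Proof.
move=> c u u'; apply: (ip_nondeg hV) => x.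
by rewrite -hT (ph_lin hU) !hT (ph_lin hV).
Qed.
Lemma adj_rev u x : ipV (Ta u) x = ipU u (T x).
Proof. by rewrite (ph_adj hV) -hT -(ph_adj hU). Qed.
Lemma adj_act u a : blk lO a -> Ta (actU u a) = actV (Ta u) a.
Proof.
move=> ha; apply: (ip_nondeg hV) => x.
by rewrite -hT (ph_act hU) // hT (ph_act hV).
Qed.
End Adj.

Section MphiTh.
Variable n : nat.
Local Notation M := (Mphi R n lO).

Lemma mval_lin (c : C) (x y : M) : mval (c *: x + y) = c *: mval x + mval y.
Proof. exact: (etrans (GRing.valD _ _) (congr1 (fun z => z + _) (GRing.valZ _ _))). Qed.
Lemma mval_blk (x : M) i : blk lO (mval x i).
Proof. by move: (mvalP x) => /forallP. Qed.
Lemma actM_val (x : M) a : blk lO a -> mval (actM x a) = [ffun i => a *m mval x i].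
Proof.
move=> ha; rewrite /actM insubdK //; apply/forallP => i; rewrite ffunE.
exact: blkM (mval_blk x i).
Qed.

Lemma PH_M : PH (@actM R n m lO) (@ipM R n m lO).
Proof.
split.
- move=> c x y z; rewrite /ipM scaler_sumr -big_split /=; apply: eq_bigr => i _.
  have H := congr1 (fun f : {ffun _ -> _} => f i) (mval_lin c y z); rewrite /= in H; rewrite H.
  by rewrite !ffunE mulmxDl scalemxAl.
- move=> x y; rewrite /ipM mxadj_sum; apply: eq_bigr => i _.
  by rewrite mxadjM mxadjK.
- move=> x h; apply: val_inj; apply/ffunP => i; apply/matrixP => j k.
  have : (ipM x x) j j = 0 by rewrite h mxE.
  rewrite /ipM summxE => /eqP; rewrite psumr_eq0; last first.
    move=> i' _; rewrite mxE; apply: sumr_ge0 => l _; rewrite !mxE.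
    exact: mul_conjC_ge0.
  move=> /allP /(_ i (mem_index_enum _)) /=; rewrite mxE psumr_eq0; last first.
    by move=> l _; rewrite !mxE; exact: mul_conjC_ge0.
  move=> /allP /(_ k (mem_index_enum _)) /=; rewrite !mxE mul_conjC_eq0 => /eqP ->.
  by rewrite /= ffunE mxE.
- move=> x y a ha; rewrite /ipM mulmx_sumr; apply: eq_bigr => i _.
  by rewrite actM_val // ffunE mulmxA.
Qed.

Lemma actM_lin a (c : C) (x y : M) : blk lO a ->
  actM (c *: x + y) a = c *: actM x a + actM y a.
Proof.
move=> ha; apply: (@val_inj _ _ M); change (mval (actM (c *: x + y) a) = mval (c *: actM x a + actM y a)).
rewrite mval_lin !actM_val //; apply/ffunP => i.
by rewrite !ffunE mulmxDr scalemxAr.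
Qed.
End MphiTh.

Section Peval.
Variables (V : lmodType C) (L : V -> V).
Hypothesis hL : lin L.

Definition peval (p : {poly C}) (x : V) :=
  \sum_(k < size p) p`_k *: iter k L x.

Lemma iter_lin k : lin (iter k L).
Proof. elim: k => [|k IH] c x y //=; by rewrite IH hL. Qed.

Lemma peval_widen (N : nat) (p : {poly C}) (x : V) : (size p <= N)%N ->
  peval p x = \sum_(k < N) p`_k *: iter k L x.
Proof.
move=> hN; rewrite /peval (big_ord_widen N (fun k => p`_k *: iter k L x) hN).
rewrite big_mkcond; apply: eq_bigr => i _; case: ifP => // /negbT.
by rewrite -leqNgt => hi; rewrite nth_default // scale0r.
Qed.

Lemma peval_lin p : lin (peval p).
Proof.
move=> c x y; rewrite /peval scaler_sumr -big_split; apply: eq_bigr => k _ /=.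
by rewrite iter_lin scalerDr !scalerA mulrC.
Qed.

Lemma pevalD p q x : peval (p + q) x = peval p x + peval q x.
Proof.
set N := maxn (size p) (size q).
have hp : (size p <= N)%N by rewrite leq_maxl.
have hq : (size q <= N)%N by rewrite leq_maxr.
have hpq : (size (p + q)%R <= N)%N by rewrite (leq_trans (size_polyD _ _)).
rewrite !(peval_widen x hp, peval_widen x hq, peval_widen x hpq) -big_split.
by apply: eq_bigr => k _; rewrite coefD scalerDl.
Qed.

Lemma pevalZ c p x : peval (c *: p) x = c *: peval p x.
Proof.
rewrite (@peval_widen (size p)) ?size_scale_leq // /peval scaler_sumr.
by apply: eq_bigr => k _; rewrite coefZ scalerA.
Qed.

Lemma pevalC c x : peval c%:P x = c *: x.
Proof.
rewrite (@peval_widen 1) ?size_polyC ?leq_b1 // big_ord1 /=.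
by rewrite coefC.
Qed.

Lemma pevalMX p x : peval (p * 'X) x = peval p (L x).
Proof.
rewrite (@peval_widen (size p).+1); last first.
  by case: (eqVneq p 0) => [->|hp]; rewrite ?mul0r ?size_poly0 // size_mulX.
rewrite big_ord_recl coefMX /= scale0r add0r /peval; apply: eq_bigr => k _.
by rewrite /bump add1n add0n coefMX /= -iterS iterSr.
Qed.

Lemma peval_comm p x : L (peval p x) = peval p (L x).
Proof.
rewrite /peval (lin_sum hL); apply: eq_bigr => k _.
by rewrite (linZ hL) -iterS iterSr.
Qed.

Lemma decomp (p : {poly C}) : exists s c, p = s * 'X + c%:P.
Proof.
elim/poly_ind: p => [|p c _]; last by exists p, c.
by exists 0, 0; rewrite mul0r add0r.
Qed.

Hypothesis hker : forall x, L (L x) = 0 -> L x = 0.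

Lemma exq (N : nat) (p : {poly C}) : (size p <= N)%N -> p != 0 -> (forall x, peval p x = 0) ->
  exists q, forall x, L x = L (L (peval q x)).
Proof.
elim: N p => [|N IH] p hs hp0 hann.
  by move: hp0; rewrite -size_poly_eq0; move: hs; rewrite leqn0 => ->.
have [s [c ep]] := decomp p.
have ann1 x : peval s (L x) + c *: x = 0.
  by rewrite -pevalMX -pevalC -pevalD -ep.
have commLL q x : L (L (peval q x)) = peval q (L (L x)).
  by rewrite !peval_comm.
case: (eqVneq c 0) => hc.
  have [t [d es]] := decomp s.
  have ann2 x : peval t (L (L x)) + d *: L x = 0.
    by rewrite -pevalMX -pevalC -pevalD -es; have := ann1 x; rewrite hc scale0r addr0.
  case: (eqVneq d 0) => hd; last first.
    exists ((- d^-1) *: t) => x; rewrite commLL pevalZ.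
    have -> : peval t (L (L x)) = - (d *: L x) by apply/eqP; rewrite -addr_eq0 ann2.
    by rewrite scalerN scaleNr opprK scalerA mulVf // scale1r.
  have hs0 : s != 0 by apply: contraNneq hp0 => hs0; rewrite ep hs0 hc mul0r add0r.
  apply: (IH s) => //.
    have e : size p = (size s).+1 by rewrite ep hc polyC0 addr0 size_mulX.
    by move: hs; rewrite e.
  move=> x; rewrite es hd polyC0 addr0 pevalMX -peval_comm.
  apply: hker; rewrite commLL.
  by have := ann2 x; rewrite hd scale0r addr0.
exists ((- c^-1) *: s) => x; rewrite commLL pevalZ.
have -> : peval s (L (L x)) = - (c *: L x) by apply/eqP; rewrite -addr_eq0 ann1.
by rewrite scalerN scaleNr opprK scalerA mulVf // scale1r.
Qed.
End Peval.

Section PevalPH.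
Variables (V : lmodType C) (act : V -> 'M[C]_m -> V) (ip : V -> V -> 'M[C]_m).
Hypothesis hV : PH act ip.
Variables (L : V -> V).
Hypothesis hL : lin L.
Hypothesis hact : forall a, blk lO a -> lin (act ^~ a).
Hypothesis hLa : forall x a, blk lO a -> L (act x a) = act (L x) a.
Hypothesis hLs : forall x y, ip (L x) y = ip x (L y).

Lemma peval_act p x a : blk lO a -> peval L p (act x a) = act (peval L p x) a.
Proof.
move=> ha; rewrite /peval (lin_sum (hact ha)); apply: eq_bigr => k _.
rewrite (linZ (hact ha)); congr (_ *: _).
by case: k => j _ /=; elim: j => [|j IH] //=; rewrite IH hLa.
Qed.

Lemma ipZl c x y : ip (c *: x) y = c^* *: ip x y.
Proof. by have := ipl_lin hV c x 0 y; rewrite addr0 (ipl0 hV) addr0. Qed.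

Lemma iter_adj k x y : ip (iter k L x) y = ip x (iter k L y).
Proof. by elim: k x y => [|k IH] x y //=; rewrite hLs IH -iterS iterSr. Qed.

Lemma peval_adj p x y :
  ip (peval L p x) y = ip x (peval L (map_poly (@Num.conj C) p) y).
Proof.
rewrite /peval (ipl_sum hV) size_map_poly (lin_sum (ip_linr hV x)).
apply: eq_bigr => k _; rewrite ipZl (linZ (ip_linr hV x)) iter_adj.
by rewrite coef_map.
Qed.
End PevalPH.

Lemma mul_lin1 p q (f : 'rV[C]_p -> 'rV[C]_q) (u : 'rV[C]_p) :
  lin f -> u *m lin1_mx f = f u.
Proof.
move=> hf; rewrite {1}(row_sum_delta u) mulmx_suml.
have {2}-> : u = \sum_(j < p) u 0 j *: 'e_j by exact: row_sum_delta.
rewrite (lin_sum hf); apply: eq_bigr => j _; rewrite -scalemxAl (linZ hf).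
congr (_ *: _); rewrite -rowE; apply/matrixP => a b; rewrite !mxE.
by rewrite (ord1 a).
Qed.

Section FinDim.
Variable n : nat.
Local Notation M := (Mphi R n lO).
Local Notation N := (n * (m * m))%N.

Definition Amx (x : M) : 'M[C]_(n, m * m) := \matrix_(i < n) mxvec (mval x i).
Definition coord (x : M) : 'rV[C]_(1 + N) := row_mx (0 : 'rV_1) (mxvec (Amx x)).
Definition unc (u : 'rV[C]_(1 + N)) : {ffun 'I_n -> 'M[C]_m} :=
  [ffun i => vec_mx (row i (vec_mx (rsubmx u)))].
Definition projf (f : {ffun 'I_n -> 'M[C]_m}) : {ffun 'I_n -> 'M[C]_m} :=
  [ffun i => \matrix_(j, k) if lO j == lO k then f i j k else 0].
Lemma projfP f : projf f \in Mpred lO.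
Proof.
apply/forallP => i; apply/blkP => j k hjk; rewrite ffunE mxE.
by rewrite (negbTE hjk).
Qed.
Definition back (u : 'rV[C]_(1 + N)) : M := MPhi (projfP (unc u)).

Lemma back_coord x : back (coord x) = x.
Proof.
apply: (@val_inj _ _ M); change (projf (unc (coord x)) = mval x).
apply/ffunP => i; apply/matrixP => j k; rewrite !ffunE mxE.
case: ifP => hjk.
  rewrite /coord row_mxKr mxvecK.
  have -> : row i (Amx x) = mxvec (mval x i).
    by apply/matrixP => a b; rewrite !mxE (ord1 a).
  by rewrite mxvecK.
by move/blkP: (mval_blk x i) => ->; rewrite ?hjk.
Qed.

Lemma coord_lin : lin coord.
Proof.
move=> c x y; rewrite /coord.
have -> : Amx (c *: x + y) = c *: Amx x + Amx y.
  apply/matrixP => a b; rewrite !mxE.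
  have H := congr1 (fun f : {ffun _ -> _} => f a) (mval_lin c x y); rewrite /= in H.
  by rewrite H !ffunE linearP !mxE.
by rewrite linearP scale_row_mx add_row_mx scaler0 addr0.
Qed.

Lemma back_lin : lin back.
Proof.
move=> c u v; apply: (@val_inj _ _ M).
change (projf (unc (c *: u + v)) = mval (c *: back u + back v)).
rewrite mval_lin; apply/ffunP => i; apply/matrixP => j k.
rewrite !ffunE !mxE.
case: ifP => _; last by rewrite mulr0 addr0.
by [].
Qed.

Lemma findim (L : M -> M) : lin L ->
  exists p : {poly C}, p != 0 /\ forall x, peval L p x = 0.
Proof.
move=> hL.
pose Lt u := coord (L (back u)).
have hLt : lin Lt by move=> c u v; rewrite /Lt back_lin hL coord_lin.
pose A : 'M[C]_(N.+1) := lin1_mx Lt.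
have cL x : coord (L x) = coord x *m A by rewrite mul_lin1 // /Lt back_coord.
have key p x : coord (peval L p x) = coord x *m horner_mx A p.
  elim/poly_ind: p x => [|p c IH] x.
    by rewrite /peval size_poly0 big_ord0 rmorph0 mulmx0 (lin0 coord_lin).
  rewrite pevalD ?pevalMX ?pevalC //.
  rewrite (linD coord_lin) (linZ coord_lin) IH cL mulrC rmorphD rmorphM /=.
  by rewrite horner_mx_X horner_mx_C mulmxDr mul_mx_scalar -mulmxA mulmxE.
exists (char_poly A); split; first by apply: monic_neq0; exact: char_poly_monic.
move=> x; rewrite -(back_coord (peval L _ x)) key Cayley_Hamilton mulmx0.
have -> : (0 : 'rV[C]_(1 + N)) = coord 0 by rewrite (lin0 coord_lin).
by rewrite back_coord.
Qed.
End FinDim.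

Section Main.
Variables (n : nat) (lI : 'I_n -> nat) (Phi : 'M[C]_n -> 'M[C]_m).
Local Notation M := (Mphi R n lO).

Lemma compress_Lmap (E : lmodType C) (actE : E -> 'M[C]_m -> E) ipE
    (W : M -> E) (Wa : E -> M) :
  Stinespring lI Phi actE ipE W Wa -> forall X, compress actE ipE W Wa X ->
  Lmap lO (@actM R n m lO) (@ipM R n m lO) (@actM R n m lO) (@ipM R n m lO) X.
Proof.
move=> [hE [Wlin Wact _] hWa _] X [T [[Tlin Tact [Ta hTa]] ->]].
have pE := HilbMod_PH hE; have pM := PH_M n.
have Walin := adj_lin pM pE hWa.
split.
- by move=> c x y /=; rewrite Wlin Tlin Walin.
- by move=> x a ha /=; rewrite Wact // Tact // (adj_act pM pE hWa).
exists (fun y => Wa (Ta (W y))) => x y /=.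
by rewrite (adj_rev pM pE hWa) hTa hWa.
Qed.

Lemma compress_transfer (E : lmodType C) (actE : E -> 'M[C]_m -> E) ipE
    (W : M -> E) (Wa : E -> M)
    (E' : lmodType C) (actE' : E' -> 'M[C]_m -> E') ipE'
    (W' : M -> E') (Wa' : E' -> M) :
  Stinespring lI Phi actE ipE W Wa -> Stinespring lI Phi actE' ipE' W' Wa' ->
  forall X, compress actE ipE W Wa X -> compress actE' ipE' W' Wa' X.
Proof.
move=> [hE [Wlin Wact _] hWa hC] [hE' [W'lin W'act _] hWa' hC'].
move=> X [T [[Tlin Tact [Ta hTa]] ->]].
have pE := HilbMod_PH hE; have pE' := HilbMod_PH hE'; have pM := PH_M n.
have Walin := adj_lin pM pE hWa; have Wa'lin := adj_lin pM pE' hWa'.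
pose Cop x := Wa (W x).
have CC' x : Wa' (W' x) = Cop x by rewrite /Cop hC hC'.
have hCl : lin Cop by move=> c x y; rewrite /Cop Wlin Walin.
have hCa x a : blk lO a -> Cop (actM x a) = actM (Cop x) a.
  by move=> ha; rewrite /Cop Wact // (adj_act pM pE hWa).
have hCs x y : ipM (Cop x) y = ipM x (Cop y).
  by rewrite /Cop (adj_rev pM pE hWa) hWa.
have hker x : Cop (Cop x) = 0 -> Cop x = 0.
  by move=> h; apply: (ph_def pM); rewrite hCs h (ipr0 pM).
have [p [hp0 hann]] := findim hCl.
have [q hq] := exq hCl hker (leqnn (size p)) hp0 hann.
pose G := peval Cop q.
pose K := peval Cop (map_poly (@Num.conj C) q).
have Glin : lin G := peval_lin hCl q.
have Klin : lin K := peval_lin hCl _.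
have hact a : blk lO a -> lin (fun x : M => actM x a) by move=> ha c x y; rewrite actM_lin.
have Gact x a : blk lO a -> G (actM x a) = actM (G x) a by move=> h; exact: (peval_act hact hCa).
have Kact x a : blk lO a -> K (actM x a) = actM (K x) a by move=> h; exact: (peval_act hact hCa).
have hGK u v : ipM (G u) v = ipM u (K v) by rewrite /G /K (peval_adj pM hCs).
have hKG u v : ipM (K u) v = ipM u (G v).
  by rewrite (ph_adj pM v (K u)) -hGK -(ph_adj pM).
have WGC x : W (G (Cop x)) = W x.
  have hz : Cop (G (Cop x) - x) = 0.
    by rewrite (linB hCl) /G -(peval_comm hCl) -hq subrr.
  apply/eqP; rewrite -subr_eq0 -(linB Wlin); apply/eqP; apply: (ph_def pE).
  by rewrite hWa -/(Cop _) hz (ipr0 pM).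
have CKWa e : Cop (K (Wa e)) = Wa e.
  apply: (ip_nondeg pM) => y.
  by rewrite -hCs -hGK -hWa WGC hWa.
exists (fun e => W' (K (Wa (T (W (G (Wa' e))))))); split.
  split.
  - by move=> c x y /=; rewrite Wa'lin Glin Wlin Tlin Walin Klin W'lin.
  - move=> x a ha /=.
    by rewrite (adj_act pM pE' hWa') // Gact // Wact // Tact // (adj_act pM pE hWa) // Kact // W'act.
  exists (fun y => W' (K (Wa (Ta (W (G (Wa' y))))))) => x y.
  rewrite hWa' hKG (adj_rev pM pE hWa) hTa hWa hGK.
  by rewrite (adj_rev pM pE' hWa').
apply: functional_extensionality => x /=.
by rewrite !CC' WGC CKWa.
Qed.
End Main.
End Gen.

Unset Implicit Arguments.

Theorem proposition3p12 (R : realType) (n m : nat)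
    (lI : 'I_n -> nat) (lO : 'I_m -> nat)
    (Phi : 'M[R[i]]_n -> 'M[R[i]]_m) (hPhi : channel lI lO Phi)
    (E : lmodType R[i]) (actE : E -> 'M[R[i]]_m -> E)
    (ipE : E -> E -> 'M[R[i]]_m)
    (W : Mphi R n lO -> E) (Wa : E -> Mphi R n lO)
    (hW : Stinespring lI Phi actE ipE W Wa)
    (E' : lmodType R[i]) (actE' : E' -> 'M[R[i]]_m -> E')
    (ipE' : E' -> E' -> 'M[R[i]]_m)
    (W' : Mphi R n lO -> E') (Wa' : E' -> Mphi R n lO)
    (hW' : Stinespring lI Phi actE' ipE' W' Wa') :
  (forall X, compress actE ipE W Wa X <-> compress actE' ipE' W' Wa' X) /\
  (forall X, compress actE ipE W Wa X ->
     Lmap lO (@actM R n m lO) (@ipM R n m lO)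
             (@actM R n m lO) (@ipM R n m lO) X).
Proof.
split.
- move=> X; split; [exact: (compress_transfer hW hW') | exact: (compress_transfer hW' hW)].
- exact: (compress_Lmap hW).
Qed.
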